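(* For every positive integer $k$, the $2$-adic valuation of $s_k$ equals $\mathrm{wt}(k)-1$, where $\mathrm{wt}(k)$ is the number of $1$'s in the binary expansion of $k$. Consequently $\nu_2(s_{2k})=\mathrm{wt}(k)-1$ and $\nu_2(s_{k,k})\geq \mathrm{wt}(k)-2$.
   Context: $\nu_2:\mathbb{Q}^\times\to\mathbb{Z}$ is the $2$-adic valuation, $\nu_2(x/y)=\nu_2(x)-\nu_2(y)$. For a partition $I=(i_1,\dots,i_r)$ of $k$, $s_I$ denotes the coefficient of $p_{i_1}\cdots p_{i_r}$ in the $k$-th Hirzebruch $\mathcal{L}$-polynomial $\mathcal{L}_k(p_1,\dots,p_k)=\sum_{|I|=k}s_Ip_I$ (multiplicative sequence with characteristic power series $\sqrt t/\tanh\sqrt t$). In particular $s_k=\frac{2^{2k}(2^{2k-1}-1)|B_{2k}|}{(2k)!}$ with $B_j$ the Bernoulli numbers, and $s_{k,k}=\tfrac12(s_k^2-s_{2k})$. *)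

(* Defs.v *)
From HB Require Import structures.
From mathcomp Require Import all_boot all_order all_algebra.
Set Implicit Arguments. Unset Strict Implicit. Unset Printing Implicit Defensive.
Import Order.TTheory GRing.Theory Num.Theory.
Local Open Scope ring_scope.

(* bern_seq n = [:: B_0; B_1; ...; B_n], Bernoulli numbers with B_1 = -1/2,
   via the recurrence  sum_{j=0}^{m} C(m+1, j) B_j = 0  (m >= 1). *)
Fixpoint bern_seq (n : nat) : seq rat :=
  match n with
  | 0%N => [:: 1]
  | m.+1 =>
      let s := bern_seq m in
      rcons s (- ((m.+2)%:R)^-1 *
               \sum_(j < m.+1) ('C(m.+2, j))%:R * nth 0 s j)
  end.

Definition bernoulli (n : nat) : rat := nth 0 (bern_seq n) n.

Definition sk (k : nat) : rat :=
  2 ^+ (2 * k) * (2 ^+ (2 * k).-1 - 1) * `|bernoulli (2 * k)|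
    / ((2 * k)`!)%:R.

Definition skk (k : nat) : rat := (sk k ^+ 2 - sk (2 * k)) / 2.

(* 2-adic valuation of a rational (meaningful for q != 0) *)
Definition nu2 (q : rat) : int :=
  (logn 2 `|numq q|%N)%:Z - (logn 2 `|denq q|%N)%:Z.

Definition wt (k : nat) : nat := (\sum_(i < k.+1) odd (k %/ 2 ^ i))%N.

(* Main.v *)
Require Import Defs.
From HB Require Import structures.
From mathcomp Require Import all_boot all_order all_algebra.
From mathcomp Require Import ring lra zify.
Import Order.TTheory GRing.Theory Num.Theory.

Definition W (N k : nat) : nat := \sum_(i < N) odd (k %/ 2 ^ i).

Lemma W_stable N M k : k < 2 ^ N -> N <= M -> W M k = W N k.
Proof.
move=> hk; elim: M => [|M IH] hNM.
  by move: hNM; rewrite leqn0 => /eqP ->.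
case: (ltngtP N M.+1) => h.
- rewrite /W big_ord_recr /= -/(W M k) IH // divn_small ?addn0 //.
  apply: leq_trans hk _; rewrite leq_exp2l //.
- by move: (leq_trans hNM (leqnn _)); rewrite leqNgt h.
- by rewrite h.
Qed.

Lemma wt_W N k : k < 2 ^ N -> wt k = W N k.
Proof.
move=> hk; rewrite /wt -/(W k.+1 k).
have hk1 : k < 2 ^ k.+1.
  apply: ltn_trans (ltn_expl k (ltnSn 1)) _; rewrite ltn_exp2l //.
rewrite -(@W_stable k.+1 (maxn N k.+1) k hk1 (leq_maxr _ _)).
by rewrite (@W_stable N (maxn N k.+1) k hk (leq_maxl _ _)).
Qed.

Lemma W_S N k : W N.+1 k = odd k + W N k./2.
Proof.
rewrite /W big_ord_recl expn0 divn1; congr (_ + _).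
apply: eq_bigr => i _; rewrite lift0 expnS divnMA divn2; by [].
Qed.

Lemma wt_bit (b : bool) m : wt (b + m.*2) = b + wt m.
Proof.
have hm : m < 2 ^ m by apply: ltn_expl.
have h1 : b + m.*2 < 2 ^ m.+2.
  rewrite !expnS; lia.
rewrite (@wt_W _ _ h1) W_S half_bit_double (@wt_W m.+1 m); last first.
  apply: ltn_trans hm _; rewrite ltn_exp2l //.
by case: b h1 => _ /=; rewrite ?odd_double ?add0n ?add1n.
Qed.

Lemma wt_double m : wt (m.*2) = wt m.
Proof. by have := wt_bit false m; rewrite add0n. Qed.

Lemma wt_gt0 k : 0 < k -> 0 < wt k.
Proof.
elim/ltn_ind: k => k IH hk.
rewrite -(odd_double_half k) wt_bit.
case: (boolP (odd k)) => ho; first by [].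
rewrite add0n; apply: IH.
- rewrite -{2}(odd_double_half k) (negbTE ho) add0n -addnn; lia.
- move: hk; rewrite -{1}(odd_double_half k) (negbTE ho) add0n; lia.
Qed.

Lemma logn_fact_double m : logn 2 (m.*2)`! = m + logn 2 m`!.
Proof.
elim: m => [|m IH]; first by [].
rewrite doubleS !factS.
rewrite lognM ?muln_gt0 ?fact_gt0 // lognM ?fact_gt0 //.
rewrite (logn_coprime (m := (m.*2).+1)); last by rewrite coprime2n /= odd_double.
rewrite IH lognM ?fact_gt0 //.
have -> : (m.*2).+2 = 2 * m.+1 by rewrite -muln2; lia.
rewrite lognM // (pfactorK 1) //; lia.
Qed.

Lemma legendre n : logn 2 n`! + wt n = n.
Proof.
elim/ltn_ind: n => n IH.
case: n IH => [|n] IH; first by rewrite /wt big_ord1.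
rewrite -(odd_double_half n.+1).
set m := n.+1./2.
have hm : m < n.+1.
  rewrite /m; have := odd_double_half n.+1; lia.
case: (odd n.+1).
- rewrite wt_bit /= factS lognM ?fact_gt0 //.
  rewrite (logn_coprime (m := (m.*2).+1)); last by rewrite coprime2n /= odd_double.
  rewrite logn_fact_double.
  have := IH m hm; lia.
- rewrite wt_bit /= add0n logn_fact_double.
  have := IH m hm; lia.
Qed.

Local Open Scope ring_scope.

Lemma size_bern n : size (bern_seq n) = n.+1.
Proof. by elim: n => //= n IH; rewrite size_rcons IH. Qed.

Lemma nth_bern n j : (j <= n)%N -> nth 0 (bern_seq n) j = bernoulli j.
Proof.
elim: n j => [|n IH] j hj.
  by move: hj; rewrite leqn0 => /eqP ->.
rewrite leq_eqVlt in hj; case/orP: hj => [/eqP -> //|hj].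
by rewrite /= nth_rcons size_bern hj IH.
Qed.

Lemma bern_rec m :
  \sum_(j < m.+2) ('C(m.+2, j))%:R * bernoulli j = 0.
Proof.
rewrite big_ord_recr /=.
have -> : bernoulli m.+1 = - ((m.+2)%:R)^-1 *
     \sum_(j < m.+1) ('C(m.+2, j))%:R * bernoulli j.
  rewrite /bernoulli /= nth_rcons size_bern ltnn eqxx.
  congr (_ * _); apply: eq_bigr => j _; rewrite nth_bern //.
  by rewrite -ltnS.
rewrite binSn mulrA mulrN mulfV ?mulN1r ?subrr //.
by rewrite pnatr_eq0.
Qed.

Lemma bern0 : bernoulli 0 = 1.
Proof. by []. Qed.

Lemma bern1 : bernoulli 1 = - 2^-1.
Proof.
have := bern_rec 0; rewrite !big_ord_recr big_ord0 /= add0r bern0.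
rewrite bin0 bin1 mul1r => h.
by lra.
Qed.

Definition fB_def (c : rat) N : {poly rat} :=
  \poly_(i < N) (c ^+ i * bernoulli i / (i`!)%:R).
Definition fE_def (c : rat) N : {poly rat} :=
  \poly_(i < N) (c ^+ i / (i`!)%:R).
Fact fB_key : unit. Proof. by []. Qed.
Fact fE_key : unit. Proof. by []. Qed.
Definition fB := locked_with fB_key fB_def.
Definition fE := locked_with fE_key fE_def.

Lemma coef_fB c N i : (fB c N)`_i =
  if (i < N)%N then c ^+ i * bernoulli i / (i`!)%:R else 0.
Proof. by rewrite /fB unlock coef_poly. Qed.
Lemma coef_fE c N i : (fE c N)`_i =
  if (i < N)%N then c ^+ i / (i`!)%:R else 0.
Proof. by rewrite /fE unlock coef_poly. Qed.

Lemma binR i j : (j <= i)%N ->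
  ('C(i, j))%:R = (i`!)%:R / ((j`!)%:R * ((i - j)`!)%:R) :> rat.
Proof.
move=> hji; rewrite -(bin_fact hji) natrM natrM mulfK //.
by rewrite mulf_neq0 // pnatr_eq0 -lt0n fact_gt0.
Qed.

Lemma fact_neq0 n : ((n`!)%:R : rat) != 0.
Proof. by rewrite pnatr_eq0 -lt0n fact_gt0. Qed.

Lemma coef_BE c N i : (i < N)%N ->
  (fB c N * (fE c N - 1))`_i = c ^+ i * (i == 1%N)%:R.
Proof.
move=> hi; rewrite coefM big_ord_recr /=.
have z : (fE c N - 1)`_(i - i) = 0.
  rewrite subnn coefB coef1 coef_fE (leq_ltn_trans (leq0n _) hi).
  by rewrite expr0 fact0 eqxx /= mulr1n divr1 subrr.
rewrite z mulr0 (addr0 (\sum_(i0 < i) _)).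
have -> : \sum_(j < i) (fB c N)`_j * (fE c N - 1)`_(i - j) =
   c ^+ i / (i`!)%:R * \sum_(j < i) ('C(i, j))%:R * bernoulli j.
  rewrite mulr_sumr; apply: eq_bigr => [[j hj]] _ /=.
  rewrite coefB coef1 coef_fB coef_fE.
  have hjN : (j < N)%N by apply: ltn_trans hi.
  have hijN : (i - j < N)%N by apply: leq_ltn_trans (leq_subr _ _) hi.
  have h0 : ((i - j)%N == 0%N) = false by rewrite subn_eq0 leqNgt hj.
  rewrite hjN hijN h0 mulr0n subr0.
  have ei : c ^+ i = c ^+ j * c ^+ (i - j).
    by rewrite -exprD subnKC // ltnW.
  rewrite (@binR i j (ltnW hj)) ei.
  have := fact_neq0 j; have := fact_neq0 (i - j); have := fact_neq0 i.
  move=> h1 h2 h3; field.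
  by rewrite h1 h2 h3.
case: i hi z => [|[|m]] hi _.
- have e : (0%N == 1%N) = false := erefl.
  rewrite big_ord0 e mulr0n; lra.
- have f : (1`! = 1)%N := erefl.
  rewrite big_ord1 bin0 bern0 eqxx f mulr1n; lra.
- have e : (m.+2 == 1%N) = false := erefl.
  rewrite bern_rec e mulr0n; lra.
Qed.

Lemma coef_EE N i : (i < N)%N ->
  (fE 1 N * fE (-1) N)`_i = (i == 0%N)%:R.
Proof.
move=> hi; rewrite coefM.
have -> : \sum_(j < i.+1) (fE 1 N)`_j * (fE (-1) N)`_(i - j) =
   1 / (i`!)%:R * \sum_(j < i.+1) (-1) ^+ (i - j) * 1 ^+ j *+ 'C(i, j).
  rewrite mulr_sumr; apply: eq_bigr => [[j hj]] _.
  rewrite !coef_fE.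
  have hjN : (j < N)%N by apply: leq_ltn_trans hi.
  have hijN : (i - j < N)%N by apply: leq_ltn_trans (leq_subr _ _) hi.
  rewrite hjN hijN !expr1n -[_ *+ 'C(_, _)]mulr_natr (@binR i j hj).
  have := fact_neq0 j; have := fact_neq0 (i - j); have := fact_neq0 i.
  move=> h1 h2 h3; field.
  by rewrite h1 h2 h3.
rewrite -exprDn addNr expr0n; case: i hi => [|i] hi.
  have e : (0%N == 0%N) = true := erefl.
  have f : (0`! = 1)%N := erefl.
  rewrite e f mulr1n; lra.
have e : (i.+1 == 0%N) = false := erefl.
rewrite e mulr0n; lra.
Qed.

Lemma dvdXn_coef (p : {poly rat}) N :
  (forall i, (i < N)%N -> p`_i = 0) -> 'X^N %| p.
Proof.
move=> h; rewrite -(poly_take_drop N p).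
have -> : take_poly N p = 0.
  apply/polyP => i; rewrite coef_take_poly coef0.
  case: ifP => hi; [exact: h | by []].
rewrite add0r; exact: dvdp_mulIr.
Qed.

Lemma coef_dvdXn (p : {poly rat}) N i :
  'X^N %| p -> (i < N)%N -> p`_i = 0.
Proof.
case/dvdpP => q -> hi; rewrite coefMXn hi; by [].
Qed.

Lemma bern_odd n : odd n -> (1 < n)%N -> bernoulli n = 0.
Proof.
move=> hodd hn.
set N := n.+2.
set b := fB 1 N; set sb := fB (-1) N; set e := fE 1 N; set se := fE (-1) N.
have A : 'X^N %| b * (e - 1) - 'X.
  apply: dvdXn_coef => i hi; rewrite coefB coef_BE // coefX expr1n mul1r.
  by rewrite subrr.
have B : 'X^N %| sb * (se - 1) + 'X.
  apply: dvdXn_coef => i hi; rewrite coefD coef_BE // coefX.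
  case: (i =P 1%N) => [->|_]; first by rewrite expr1 mulr1 addNr.
  by rewrite mulr0 addr0.
have C : 'X^N %| e * se - 1.
  apply: dvdXn_coef => i hi; rewrite coefB coef_EE // coef1 subrr; by [].
have D : 'X^N %| (sb - 'X - b) * (e - 1).
  have -> : (sb - 'X - b) * (e - 1) =
     sb * (e * se - 1) - e * (sb * (se - 1) + 'X) - (b * (e - 1) - 'X).
    ring.
  apply: dvdp_sub; last exact: A.
  apply: dvdp_sub; [exact: dvdp_mull | exact: dvdp_mull].
set u : {poly rat} := \poly_(i < N.-1) (1 / ((i.+1)`!)%:R).
have Eu : e - 1 = 'X * u.
  apply/polyP => i; rewrite coefB coef1 coefXM /e coef_fE /u coef_poly.
  case: i => [|i].
    have f : (0`! = 1)%N := erefl.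
    have hN : (0 < N)%N := erefl.
    rewrite f expr1n eqxx mulr1n hN; lra.
  have ei : (i.+1 == 0%N) = false := erefl.
  rewrite ei mulr0n expr1n subr0 succnK.
  have -> : (i.+1 < N)%N = (i < N.-1)%N := erefl.
  reflexivity.
have Xn : 'X^N = 'X * 'X^(n.+1) :> {poly rat} by rewrite /N exprS.
move: D; rewrite Eu Xn mulrCA dvdp_mul2l; last by rewrite polyX_eq0.
have cop : coprimep 'X^(n.+1) u.
  apply: coprimep_expl; rewrite coprimep_sym.
  have := coprimep_XsubC u 0; rewrite polyC0 subr0 => ->.
  rewrite /root horner_coef0 /u coef_poly.
  have hN1 : (0 < N.-1)%N := erefl.
  have f : (1`! = 1)%N := erefl.
  rewrite hN1 f mulr1n divr1 oner_eq0; exact: isT.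
rewrite Gauss_dvdpl // => D.
have := @coef_dvdXn _ _ n D (ltnSn n).
have hnN : (n < N)%N := ltnW (ltnSn _).
have n1 : (n == 1%N) = false by apply/eqP => e1; rewrite e1 in hn.
rewrite !coefB !coef_fB coefX hnN n1 mulr0n -signr_odd hodd expr1 expr1n mulN1r mul1r mulNr.
set x := bernoulli n / (n`!)%:R => h.
have hx : x = 0 by lra.
move/eqP: hx; rewrite mulf_eq0 invr_eq0 (negbTE (fact_neq0 n)) orbF.
by move/eqP.
Qed.

Definition Z2 (q : rat) := exists (a : int) (b : nat), odd b /\ q = a%:~R / b%:R.

Lemma odd_neq0 {b : nat} : odd b -> (b%:R : rat) != 0.
Proof. by move=> hb; rewrite pnatr_eq0; apply/eqP => e; rewrite e in hb. Qed.

Lemma Z2_int (a : int) : Z2 a%:~R.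
Proof. exists a, 1%N; split => //; rewrite divr1; by []. Qed.

Lemma Z2_nat (n : nat) : Z2 n%:R.
Proof. have := Z2_int n; by rewrite pmulrn. Qed.

Lemma Z2D p q : Z2 p -> Z2 q -> Z2 (p + q).
Proof.
move=> [a [b [hb ->]]] [c [d [hd ->]]].
exists (a * d%:Z + c * b%:Z), (b * d)%N; split; first by rewrite oddM hb hd.
have := odd_neq0 hb; have := odd_neq0 hd => h1 h2.
rewrite natrM intrD !intrM -!pmulrn; field.
by rewrite h1 h2.
Qed.

Lemma Z2M p q : Z2 p -> Z2 q -> Z2 (p * q).
Proof.
move=> [a [b [hb ->]]] [c [d [hd ->]]].
exists (a * c), (b * d)%N; split; first by rewrite oddM hb hd.
have := odd_neq0 hb; have := odd_neq0 hd => h1 h2.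
rewrite natrM intrM; field.
by rewrite h1 h2.
Qed.

Lemma Z2N p : Z2 p -> Z2 (- p).
Proof.
move=> h; have -> : - p = (-1)%:~R * p by rewrite mulrN1z mulNr mul1r.
by apply: Z2M => //; apply: Z2_int.
Qed.

Lemma Z2B p q : Z2 p -> Z2 q -> Z2 (p - q).
Proof. by move=> hp hq; apply: Z2D => //; apply: Z2N. Qed.

Lemma Z2_div p (m : nat) : odd m -> Z2 p -> Z2 (p / m%:R).
Proof.
move=> hm [a [b [hb ->]]].
exists a, (b * m)%N; split; first by rewrite oddM hb hm.
have := odd_neq0 hb; have := odd_neq0 hm => h1 h2.
rewrite natrM; field.
by rewrite h1 h2.
Qed.

Lemma Z2_sum n (F : 'I_n -> rat) : (forall i, Z2 (F i)) -> Z2 (\sum_(i < n) F i).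
Proof.
move=> h; apply: (big_ind Z2) => //; first by have := Z2_nat 0.
exact: Z2D.
Qed.

Definition g (n j : nat) : rat := ('C(n, j))%:R * (1 + (-1) ^+ j).

Lemma sumCsign n : \sum_(j < n.+2) g n.+1 j = 2 ^+ n.+1.
Proof.
have h1 : (1 + 1 : rat) ^+ n.+1 = \sum_(j < n.+2) ('C(n.+1, j))%:R.
  rewrite exprDn; apply: eq_bigr => j _; rewrite !expr1n mulr1 pmulrn; by [].
have h2 : (1 + -1 : rat) ^+ n.+1 = \sum_(j < n.+2) ('C(n.+1, j))%:R * (-1) ^+ j.
  rewrite exprDn; apply: eq_bigr => j _; rewrite expr1n mul1r -mulr_natr mulrC.
  by [].
rewrite addrN expr0n in h2.
have -> : (2 : rat) = 1 + 1 by [].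
rewrite h1 /g.
under eq_bigr => j _ do rewrite mulrDr mulr1.
rewrite big_split -h2.
have e : (n.+1 == 0%N) = false := erefl.
rewrite e mulr0n; exact: addr0.
Qed.

Lemma peell (F : nat -> rat) n :
  \sum_(j < n.+2) F j = F 0%N + F 1%N + \sum_(j < n) F j.+2.
Proof.
rewrite big_ord_recl big_ord_recl addrA; by [].
Qed.

Lemma peelr (F : nat -> rat) n :
  \sum_(j < n.+1) F j = \sum_(j < n) F j + F n.
Proof. rewrite big_ord_recr; by []. Qed.

Definition f (j : nat) : rat := (1 + (-1) ^+ j) / 2 + (j == 0%N)%:R - (j == 1%N)%:R.

Lemma F_eval m : ~~ odd m ->
  \sum_(j < m.+2) ('C(m.+3, j))%:R * f j = 2 ^+ m.+2 - 2 * (m.+2)%:R - 1.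
Proof.
move=> hm.
have S := sumCsign m.+2.
rewrite peelr peelr peell in S.
rewrite (peell (fun j => ('C(m.+3, j))%:R * f j)).
have -> : \sum_(j < m) ('C(m.+3, j.+2))%:R * f j.+2 =
          (\sum_(j < m) g m.+3 j.+2) / 2.
  rewrite mulr_suml; apply: eq_bigr => j _.
  rewrite /f /g.
  have e0 : (j.+2 == 0%N) = false := erefl.
  have e1 : (j.+2 == 1%N) = false := erefl.
  rewrite e0 e1 !mulr0n subr0 addr0 mulrA; by [].
move: S; set X := \sum_(j < m) g m.+3 j.+2 => S.
have o2 : odd m.+2 = false by rewrite /= negbK (negbTE hm).
have o3 : odd m.+3 = true by rewrite /= negbK (negbTE hm).
move: S; rewrite /g /f bin0 bin1 binSn binn -(signr_odd _ m.+2) -(signr_odd _ m.+3) o2 o3.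
have e00 : (0%N == 0%N) = true := erefl.
have e01 : (0%N == 1%N) = false := erefl.
have e10 : (1%N == 0%N) = false := erefl.
have e11 : (1%N == 1%N) = true := erefl.
rewrite e00 e01 e10 e11 !expr0 !expr1 mulr0n mulr1n.
have n3 : (m.+3)%:R = m%:R + 3 :> rat by rewrite -addn3 natrD.
have n2 : (m.+2)%:R = m%:R + 2 :> rat by rewrite -addn2 natrD.
rewrite n3 n2 exprS => S.
lra.
Qed.

Definition t (j : nat) : rat := (2 * bernoulli j - f j) / 2.

Lemma sum_split (m : nat) (A B : nat -> rat) :
  \sum_(j < m) (A j + B j) = \sum_(j < m) A j + \sum_(j < m) B j.
Proof. by rewrite big_split. Qed.

Lemma bern2 n : Z2 (2 * bernoulli n) /\
  (~~ odd n -> (1 < n)%N -> Z2 ((2 * bernoulli n - 1) / 2)).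
Proof.
elim/ltn_ind: n => n IH.
case: n IH => [|[|m]] IH.
- split; last by [].
  rewrite bern0 mulr1; exact: (Z2_nat 2).
- split; last by [].
  rewrite bern1.
  have -> : 2 * - 2^-1 = (-1)%:~R :> rat.
    rewrite mulrN mulfV; last by []. by rewrite mulrN1z.
  exact: Z2_int.
case: (boolP (odd m)) => hm.
- have ho : odd m.+2 by rewrite /= negbK.
  rewrite bern_odd //.
  split; last by rewrite ho.
  rewrite mulr0; exact: (Z2_nat 0).
have ht : forall j, (j < m.+2)%N -> Z2 (t j).
  move=> j hj; rewrite /t /f.
  case: j hj => [|[|j]] hj.
  + rewrite bern0.
    have -> : (2 * 1 - ((1 + (-1) ^+ 0) / 2 + (0%N == 0%N)%:R - (0%N == 1%N)%:R)) / 2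
       = 0%:R :> rat.
      have e00 : (0%N == 0%N) = true := erefl.
      have e01 : (0%N == 1%N) = false := erefl.
      rewrite e00 e01 expr0 mulr1n mulr0n; lra.
    exact: Z2_nat.
  + rewrite bern1.
    have -> : (2 * - 2^-1 - ((1 + (-1) ^+ 1) / 2 + (1%N == 0%N)%:R - (1%N == 1%N)%:R)) / 2
       = 0%:R :> rat.
      have e10 : (1%N == 0%N) = false := erefl.
      have e11 : (1%N == 1%N) = true := erefl.
      rewrite e10 e11 expr1 mulr1n mulr0n; lra.
    exact: Z2_nat.
  + have e0 : (j.+2 == 0%N) = false := erefl.
    have e1 : (j.+2 == 1%N) = false := erefl.
    rewrite e0 e1 !mulr0n subr0 addr0 -signr_odd.
    case: (boolP (odd j.+2)) => hj2.
    * rewrite bern_odd // expr1.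
      have -> : (2 * 0 - (1 + -1) / 2) / 2 = 0%:R :> rat by lra.
      exact: Z2_nat.
    * rewrite expr0.
      have := (IH j.+2 hj).2 hj2 erefl.
      have -> : (1 + 1) / 2 = 1 :> rat by lra.
      by [].
set T := \sum_(j < m.+2) ('C(m.+3, j))%:R * t j.
have hT : Z2 T.
  apply: Z2_sum => i; apply: Z2M; first exact: Z2_nat.
  exact: ht (ltn_ord i).
have hF := @F_eval m hm.
have hrec := bern_rec m.+1.
rewrite (peelr (fun j => ('C(m.+3, j))%:R * bernoulli j)) binSn in hrec.
set S := \sum_(j < m.+2) ('C(m.+3, j))%:R * bernoulli j in hrec.
have hs : S = (\sum_(j < m.+2) ('C(m.+3, j))%:R * f j) / 2 + T.
  rewrite /S /T mulr_suml.
  rewrite -(@sum_split m.+2 (fun j => ('C(m.+3, j))%:R * f j / 2) (fun j => ('C(m.+3, j))%:R * t j)).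
  apply: eq_bigr => j _; rewrite /t; field; exact: isT.
have m3 : (m.+3)%:R != 0 :> rat by rewrite pnatr_eq0.
have hB : bernoulli m.+2 = - S / (m.+3)%:R.
  have h1 : (m.+3)%:R * bernoulli m.+2 = - S by lra.
  rewrite -h1; field.
  have n3 : (m.+3)%:R = m%:R + 3 :> rat by rewrite -addn3 natrD.
  by rewrite addrC -n3.
have hk : m = ((m./2).*2)%N.
  by rewrite -{1}(odd_double_half m) (negbTE hm) add0n.
set k := m./2 in hk.
have claim : (2 * bernoulli m.+2 - 1) / 2 =
    - ((2 ^ m.+1)%N%:R - (k.+1)%:R + T) / (m.+3)%:R.
  rewrite hB hs hF natrX exprS.
  have n3 : (m.+3)%:R = m%:R + 3 :> rat by rewrite -addn3 natrD.
  have n2 : (m.+2)%:R = m%:R + 2 :> rat by rewrite -addn2 natrD.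
  have nk : (k.+1)%:R = k%:R + 1 :> rat by rewrite -addn1 natrD.
  have mk : m%:R = 2 * k%:R :> rat by rewrite hk -muln2 natrM mulrC.
  move: m3; rewrite n3 n2 nk mk => m3'.
  field; exact: m3'.
have h2 : Z2 ((2 * bernoulli m.+2 - 1) / 2).
  rewrite claim; apply: Z2_div; first by rewrite /= negbK.
  apply: Z2N; apply: Z2D => //; apply: Z2B; exact: Z2_nat.
split; last by move=> _ _.
have -> : 2 * bernoulli m.+2 = 2 * ((2 * bernoulli m.+2 - 1) / 2) + 1 by field.
apply: Z2D; last exact: (Z2_nat 1).
apply: Z2M => //; exact: (Z2_nat 2).
Qed.

Lemma cross (x y n d : int) : y != 0 -> d != 0 ->
  (n%:~R / d%:~R : rat) = x%:~R / y%:~R -> x * d = n * y.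
Proof.
move=> hy hd h; apply: (@intr_inj rat); rewrite !intrM.
have hyR : (y%:~R : rat) != 0 by rewrite intr_eq0.
have hdR : (d%:~R : rat) != 0 by rewrite intr_eq0.
have -> : (x%:~R : rat) = x%:~R / y%:~R * y%:~R by rewrite mulfVK.
rewrite -h; field; exact: hdR.
Qed.

Lemma nu2_frac (x y : int) : x != 0 -> y != 0 ->
  nu2 (x%:~R / y%:~R) = (logn 2 `|x|%N)%:Z - (logn 2 `|y|%N)%:Z.
Proof.
move=> hx hy; set q := x%:~R / y%:~R.
have hyR : (y%:~R : rat) != 0 by rewrite intr_eq0.
have hxR : (x%:~R : rat) != 0 by rewrite intr_eq0.
have hq0 : q != 0 by rewrite /q mulf_neq0 // invr_eq0.
have hd : ((denq q)%:~R : rat) != 0 by rewrite intr_eq0; apply: denq_neq0.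
have hn : numq q != 0 by rewrite numq_eq0.
have e : (x * denq q) = (numq q * y).
  apply: cross => //.
  by rewrite divq_num_den.
have := congr1 (fun z => logn 2 `|z|%N) e; rewrite /= !abszM.
rewrite lognM ?absz_gt0 ?hx ?denq_neq0 // lognM ?absz_gt0 ?hn ?hy //.
rewrite /nu2 -/q; lia.
Qed.

Lemma logn_odd (x : nat) : odd x -> logn 2 x = 0%N.
Proof. by move=> hx; apply: logn_coprime; rewrite coprime2n. Qed.

Lemma odd_pos (x : nat) : odd x -> (0 < x)%N.
Proof. by case: x. Qed.

Lemma nu2_nat (e x y : nat) : odd x -> odd y ->
  nu2 ((2 ^ e * x)%N%:R / y%:R) = e%:Z.
Proof.
move=> hx hy.
have := @nu2_frac (2 ^ e * x)%N y.
rewrite !pmulrn => ->.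
  have pe : (logn 2 (2 ^ e) = e)%N by apply: pfactorK.
  rewrite /= (lognM 2 (expn_gt0 2 e) (@odd_pos x hx)) pe !logn_odd //.
  by rewrite addn0 subr0.
- by rewrite eqz_nat muln_eq0 negb_or expn_eq0 /= -lt0n odd_pos.
- by rewrite eqz_nat -lt0n odd_pos.
Qed.

Lemma skE k : sk k =
  2 ^+ (k.*2) * (2 ^+ (k.*2).-1 - 1) * `|bernoulli (k.*2)| / ((k.*2)`!)%:R.
Proof.
by rewrite /sk mul2n.
Qed.

Lemma babs k : (0 < k)%N -> exists x b : nat,
  [/\ odd x, odd b & `|bernoulli (k.*2)| = x%:R / (b.*2)%:R].
Proof.
move=> hk.
have [_ h] := bern2 (k.*2).
have h1 : (1 < k.*2)%N by rewrite -addnn; lia.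
have [a [b [hb E]]] := h (negbT (odd_double k)) h1.
have hbR := odd_neq0 hb.
have hB : bernoulli (k.*2) = (a * 2 + b%:Z)%:~R / (b.*2)%:R.
  have -> : bernoulli (k.*2) = ((2 * bernoulli (k.*2) - 1) / 2) + 1 / 2 + 0 by field.
  rewrite E intrD intrM -pmulrn -muln2 natrM; field.
  exact: hbR.
exists `|(a * 2 + b%:Z)%R|%N, b; split => //.
- have hb2 : (b %% 2 = 1)%N by rewrite modn2 hb.
  have : (`|(a * 2 + b%:Z)%R|%N %% 2 = 1)%N by lia.
  by rewrite modn2; case: (odd _).
- by rewrite hB normf_div -intr_norm -natr_absz (ger0_norm (ler0n _ _)).
Qed.

Lemma sk_form k : (0 < k)%N -> exists x y : nat,
  [/\ odd x, odd y & sk k = ((2 ^ (wt k).-1 * x)%N)%:R / y%:R].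
Proof.
move=> hk; have [x0 [b [hx0 hb hB]]] := @babs k hk.
have [o ho hK] := @pfactor_coprime 2 (k.*2)`! isT (fact_gt0 _).
rewrite coprime2n in ho.
have hleg := legendre (k.*2).
rewrite wt_double in hleg.
have hw := @wt_gt0 k hk.
move: hK hleg; set v := logn 2 (k.*2)`!; set w := wt k => hK hleg.
have hu : (2 ^+ (k.*2).-1 - 1 : rat) = (2 ^ (k.*2).-1 - 1)%N%:R.
  by rewrite natrB ?expn_gt0 // natrX.
have hodu : odd (2 ^ (k.*2).-1 - 1)%N.
  rewrite oddB ?expn_gt0 // oddX /=.
  have : ((k.*2).-1 == 0%N) = false by rewrite -addnn; lia.
  by move=> ->.
exists ((2 ^ (k.*2).-1 - 1) * x0)%N, (b * o)%N; split.
- by rewrite oddM hodu hx0.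
- by rewrite oddM hb ho.
rewrite skE hu hB hK.
have e2 : 2 ^+ k.*2 = 2 ^+ v * 2 ^+ w.-1 * 2 :> rat.
  rewrite -exprD -exprSr; congr (_ ^+ _); lia.
rewrite e2 !natrM !natrX -[b.*2]muln2 natrM.
have h1 := odd_neq0 hb; have h2 := odd_neq0 ho.
have h3 : (2 : rat) ^+ v != 0 by rewrite expf_neq0.
field.
by rewrite h1 h2 h3.
Qed.

Theorem mainTheorem3 (k : nat) (hk : (0 < k)%N) :
  nu2 (sk k) = (wt k)%:Z - 1 /\
  nu2 (sk (2 * k)) = (wt k)%:Z - 1 /\
  (skk k = 0 \/ (wt k)%:Z - 2 <= nu2 (skk k)).
Proof.
have hw := @wt_gt0 k hk.
have [x [y [hx hy E1]]] := @sk_form k hk.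
have hk2 : (0 < 2 * k)%N by rewrite muln_gt0.
have [x2 [y2 [hx2 hy2 E2]]] := @sk_form (2 * k)%N hk2.
rewrite mul2n wt_double -mul2n in E2.
split; first by rewrite E1 nu2_nat //; lia.
split; first by rewrite E2 nu2_nat //; lia.
set c := (2 ^ (wt k).-1)%N.
set M : int := (c * x ^ 2 * y2)%N%:Z - (x2 * y ^ 2)%N%:Z.
have claim : skk k = ((c%:Z * M)%:~R) / ((2 * y ^ 2 * y2)%N%:Z)%:~R.
  rewrite /skk E1 E2 /M.
  rewrite intrM intrB -!pmulrn !natrM !natrX.
  have h1 := odd_neq0 hy; have h2 := odd_neq0 hy2.
  field.
  by rewrite h1 h2.
case: (M =P 0) => hM.
  left; rewrite claim hM mulr0 mul0r; by [].
right; rewrite claim nu2_frac; last first.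
- rewrite eqz_nat; have := @odd_pos y hy; have := @odd_pos y2 hy2; nia.
- apply: mulf_neq0; last by apply/eqP.
  rewrite /c; have := expn_gt0 2 (wt k).-1; lia.
rewrite abszM /= lognM ?expn_gt0 ?absz_gt0 //; last by apply/eqP.
have pe : (logn 2 (2 ^ (wt k).-1) = (wt k).-1)%N by apply: pfactorK.
rewrite pe -mulnA (lognM 2 (isT : (0 < 2)%N)); last first.
  by rewrite muln_gt0 expn_gt0 !odd_pos.
have e1 : (logn 2 2 = 1)%N by [].
rewrite e1 lognM ?expn_gt0 ?odd_pos // lognX (@logn_odd y hy) (@logn_odd y2 hy2).
lia.
Qed.
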